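(* For all integers $n\ge 2$ and $k\ge 1$, $b(n+1,k)\ge 2\,b(n,k)$.
   Context: A complete non-ambiguous matrix (CNM) of size $n$ is an $n\times n$ matrix $M=(m_{i,j})$ with entries in $\{0,1\}$ whose support $T=\{(i,j): m_{i,j}=1\}$ (whose elements are called vertices) satisfies: (1) $(1,1)\in T$; (2) for every $p=(i,j)\in T$ with $p\neq(1,1)$, exactly one of the following holds: there is $(i',j)\in T$ with $i'<i$, or there is $(i,j')\in T$ with $j'<j$; (3) every row and every column of $M$ contains at least one vertex; (4) define the parent of $p=(i,j)\neq(1,1)$ to be $(i',j)$ with $i'<i$ maximal if such a vertex exists, and otherwise $(i,j')$ with $j'<j$ maximal; then every vertex is the parent of either zero or exactly two vertices. A vertex with no children is a leaf. The leaf matrix $p(M)$ is obtained from $M$ by replacing all non-leaf vertices by $0$ (it is a permutation matrix). For $n\ge 1$ and $k\ge 0$, $b(n,k)$ denotes the number of permutations $\sigma\in S_n$ such that there are exactly $k$ CNMs $M$ of size $n$ whose leaf matrix $p(M)$ equals the permutation matrix of $\sigma$ (the matrix with $1$'s at positions $(i,\sigma(i))$). *)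

(* Defs.v *)
From mathcomp Require Import all_boot all_algebra all_fingroup.
Set Implicit Arguments. Unset Strict Implicit. Unset Printing Implicit Defensive.

(* Indices are 0-based ordinals: the paper's position (i,j) (1-based) is
   (i-1, j-1) here; in particular the paper's (1,1) is (0,0). *)
Section CNM.
Variable n : nat.
Implicit Type M : 'M[bool]_n.

Definition is_origin (i j : 'I_n) : bool := (val i == 0) && (val j == 0).

Definition has_above M (i j : 'I_n) : bool := [exists i' : 'I_n, (i' < i) && M i' j].
Definition has_left M (i j : 'I_n) : bool := [exists j' : 'I_n, (j' < j) && M i j'].

Definition is_parent M (p q : 'I_n * 'I_n) : bool :=
  let: (a, b) := p in let: (i, j) := q in
  [&& M a b, M i j, ~~ is_origin i j &
   if has_above M i j then
     [&& b == j, a < i & [forall i'' : 'I_n, ((a < i'') && (i'' < i)) ==> ~~ M i'' j]]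
   else
     [&& a == i, b < j & [forall j'' : 'I_n, ((b < j'') && (j'' < j)) ==> ~~ M i j'']]].

Definition nchildren M (p : 'I_n * 'I_n) : nat := #|[set q | is_parent M p q]|.

Definition is_CNM M : bool :=
  [&& [exists i : 'I_n, exists j : 'I_n, is_origin i j && M i j],
      [forall i : 'I_n, forall j : 'I_n,
                   (M i j && ~~ is_origin i j) ==> (has_above M i j (+) has_left M i j)],
      [forall i : 'I_n, exists j : 'I_n, M i j],
      [forall j : 'I_n, exists i : 'I_n, M i j] &
      [forall i : 'I_n, forall j : 'I_n,
                   M i j ==> ((nchildren M (i, j) == 0) || (nchildren M (i, j) == 2))]].

Definition leaf_matrix M : 'M[bool]_n :=
  \matrix_(i, j) (M i j && (nchildren M (i, j) == 0)).

Definition perm_bmx (s : 'S_n) : 'M[bool]_n := \matrix_(i, j) (s i == j).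

Definition num_CNM_with_leaves (s : 'S_n) : nat :=
  #|[set M : 'M[bool]_n | is_CNM M && (leaf_matrix M == perm_bmx s)]|.

End CNM.

Definition b (n k : nat) : nat := #|[set s : 'S_n | num_CNM_with_leaves s == k]|.

(* Main.v *)
Require Import Defs.
From mathcomp Require Import all_boot all_algebra all_fingroup.
Set Implicit Arguments. Unset Strict Implicit. Unset Printing Implicit Defensive.

Lemma card_pairs n (P : pred ('I_n * 'I_n)) :
  #|[set q | P q]| = \sum_(a < n) \sum_(b < n) P (a,b).
Proof.
rewrite cardsE -sum1_card pair_big /= big_mkcond /=.
by apply: eq_bigr => -[a b] _; rewrite unfold_in /=; case: (P _).
Qed.

Section Gen.
Variable n : nat.
Implicit Types M : 'M[bool]_n.

Lemma nchE M p : nchildren M p = \sum_(a < n) \sum_(b < n) is_parent M p (a,b).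
Proof. exact: card_pairs. Qed.

Lemma child_unique M p q1 q2 : is_parent M p q1 -> is_parent M p q2 ->
  has_above M q1.1 q1.2 = has_above M q2.1 q2.2 -> q1 = q2.
Proof.
move: p q1 q2 => [a b] [i1 j1] [i2 j2] /=; rewrite /is_parent.
case/and4P => _ M1 _ C1; case/and4P => _ M2 _ C2 Eh; rewrite Eh in C1.
case: (has_above M i2 j2) in C1 C2.
- case/and3P: C1 => /eqP e1 l1 /forallP F1; case/and3P: C2 => /eqP e2 l2 /forallP F2.
  subst; case: (ltngtP i1 i2) => h.
  + by have := F2 i1; rewrite l1 h M1.
  + by have := F1 i2; rewrite l2 h M2.
  + by congr pair; apply: val_inj.
- case/and3P: C1 => /eqP e1 l1 /forallP F1; case/and3P: C2 => /eqP e2 l2 /forallP F2.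
  subst; case: (ltngtP j1 j2) => h.
  + by have := F2 j1; rewrite l1 h M1.
  + by have := F1 j2; rewrite l2 h M2.
  + by congr pair; apply: val_inj.
Qed.

Lemma nch2_col M p : nchildren M p = 2 -> exists q, is_parent M p q && has_above M q.1 q.2.
Proof.
move/eqP/cards2P => [q1 [q2 [ne E]]].
have h1 : is_parent M p q1 by have := set21 q1 q2; rewrite -E inE.
have h2 : is_parent M p q2 by have := set22 q1 q2; rewrite -E inE.
case A1: (has_above M q1.1 q1.2); first by exists q1; rewrite h1 A1.
case A2: (has_above M q2.1 q2.2); first by exists q2; rewrite h2 A2.
by move: ne; rewrite (child_unique h1 h2) ?eqxx // A1 A2.
Qed.

Definition cond2 M := [forall i : 'I_n, forall j : 'I_n,
   (M i j && ~~ is_origin i j) ==> (has_above M i j (+) has_left M i j)].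

Lemma has_above_tr M i j : has_above (M^T)%R j i = has_left M i j.
Proof. by apply: eq_existsb => x; rewrite mxE. Qed.
Lemma has_left_tr M i j : has_left (M^T)%R j i = has_above M i j.
Proof. by apply: eq_existsb => x; rewrite mxE. Qed.
Lemma is_origin_tr (i j : 'I_n) : is_origin j i = is_origin i j.
Proof. exact: andbC. Qed.

Lemma is_parent_tr M a b i j : cond2 M ->
  is_parent (M^T)%R (b,a) (j,i) = is_parent M (a,b) (i,j).
Proof.
move=> /forallP C; rewrite /is_parent !mxE has_above_tr is_origin_tr.
case Mab: (M a b) => //=; case Mij: (M i j) => //=.
case O: (is_origin i j) => //=.
have := C i => /forallP /(_ j); rewrite Mij O /= => X.
have E1 : [forall i'' : 'I_n, (b < i'') && (i'' < j) ==> ~~ (M^T)%R i'' i] =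
          [forall j'' : 'I_n, (b < j'') && (j'' < j) ==> ~~ M i j''].
  by apply: eq_forallb => x; rewrite mxE.
have E2 : [forall j'' : 'I_n, (a < j'') && (j'' < i) ==> ~~ (M^T)%R j j''] =
          [forall i'' : 'I_n, (a < i'') && (i'' < i) ==> ~~ M i'' j].
  by apply: eq_forallb => x; rewrite mxE.
rewrite E1 E2.
by case: (has_above M i j) X; case: (has_left M i j).
Qed.


Lemma nch_tr M i j : cond2 M -> nchildren (M^T)%R (j,i) = nchildren M (i,j).
Proof.
move=> C; rewrite !nchE exchange_big; apply: eq_bigr => a _; apply: eq_bigr => b _.
by rewrite is_parent_tr.
Qed.

Lemma CNM_cond2 M : is_CNM M -> cond2 M.
Proof. by case/and5P. Qed.

Lemma CNM_tr M : is_CNM M -> is_CNM (M^T)%R.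
Proof.
move=> H; have C := CNM_cond2 H; move: H.
case/and5P => C1 C2 C3 C4 C5; apply/and5P; split.
- case/existsP: C1 => i /existsP [j /andP[o m]]; apply/existsP; exists j.
  by apply/existsP; exists i; rewrite mxE is_origin_tr o m.
- apply/forallP => j; apply/forallP => i.
  rewrite mxE has_above_tr has_left_tr is_origin_tr addbC.
  exact: (forallP (forallP C2 i) j).
- apply/forallP => j; case/existsP: (forallP C4 j) => i h.
  by apply/existsP; exists i; rewrite mxE.
- apply/forallP => j; case/existsP: (forallP C3 j) => i h.
  by apply/existsP; exists i; rewrite mxE.
- apply/forallP => j; apply/forallP => i; rewrite mxE nch_tr //.
  exact: (forallP (forallP C5 i) j).
Qed.

Lemma leaf_tr M : cond2 M -> leaf_matrix (M^T)%R = ((leaf_matrix M)^T)%R.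
Proof. by move=> C; apply/matrixP => i j; rewrite !mxE nch_tr. Qed.

Lemma perm_tr (s : 'S_n) : perm_bmx (s^-1)%g = ((perm_bmx s)^T)%R.
Proof.
apply/matrixP => i j; rewrite !mxE.
by apply/eqP/eqP => [<-|<-]; rewrite ?permKV ?permK.
Qed.

Lemma num_inv (s : 'S_n) : num_CNM_with_leaves (s^-1)%g = num_CNM_with_leaves s.
Proof.
rewrite /num_CNM_with_leaves.
have -> : [set M : 'M[bool]_n | is_CNM M && (leaf_matrix M == perm_bmx (s^-1)%g)] =
    (@trmx bool n n) @: [set M : 'M[bool]_n | is_CNM M && (leaf_matrix M == perm_bmx s)].
  apply/setP => N; rewrite inE; apply/idP/imsetP.
  - case/andP => HN /eqP L; exists (N^T)%R; last by rewrite trmxK.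
    by rewrite inE CNM_tr //= leaf_tr ?CNM_cond2 // L -perm_tr invgK eqxx.
  - move=> [M]; rewrite inE => /andP [HM /eqP L] ->.
    by rewrite (CNM_tr HM) /= leaf_tr ?CNM_cond2 // L perm_tr eqxx.
by rewrite card_imset //; apply: trmx_inj.
Qed.

End Gen.

Section Last.
Variable m : nat.
Implicit Types M : 'M[bool]_(m.+1).

Lemma last_row M (s : 'S_(m.+1)) : is_CNM M -> leaf_matrix M = perm_bmx s ->
  forall j, M ord_max j = (s ord_max == j).
Proof.
move=> H L j; move/matrixP: L => /(_ ord_max j); rewrite !mxE.
case Mj: (M ord_max j) => //= <-.
case/and5P: H => _ _ _ _ /forallP /(_ ord_max) /forallP /(_ j).
rewrite Mj /= => /orP [// | /eqP /nch2_col [[a b] /andP [P HA]]].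
case/and4P: P => _ _ _; rewrite /= HA => /and3P [_ l _].
by rewrite ltnNge leq_ord in l.
Qed.

Lemma last_col M (s : 'S_(m.+1)) : is_CNM M -> leaf_matrix M = perm_bmx s ->
  forall i, M i ord_max = ((s^-1)%g ord_max == i).
Proof.
move=> H L i.
have := @last_row (M^T)%R (s^-1)%g (CNM_tr H).
rewrite leaf_tr ?CNM_cond2 // L perm_tr => /(_ erefl i).
by rewrite mxE.
Qed.

End Last.

Definition cond5 n (M : 'M[bool]_n) := [forall i : 'I_n, forall j : 'I_n,
  M i j ==> ((nchildren M (i, j) == 0) || (nchildren M (i, j) == 2))].

Section Ext.
Variable m : nat.
Notation w := (@lift m.+2 ord_max).
Notation mm := (@ord_max m).
Notation mx := (@ord_max m.+1).

Lemma val_w (i : 'I_m.+1) : (w i : nat) = i.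
Proof. exact: lift_max. Qed.
Lemma val_w' (i : 'I_m.+1) : val (w i) = val i.
Proof. exact: lift_max. Qed.

Lemma lt_maxw (i : 'I_m.+1) : (mx < w i) = false.
Proof. by rewrite val_w /= ltnNge (ltnW (ltn_ord i)). Qed.
Lemma lt_wmax (i : 'I_m.+1) : (w i < mx) = true.
Proof. by rewrite val_w /= ltn_ord. Qed.
Lemma lt_ww (i j : 'I_m.+1) : (w i < w j) = (i < j).
Proof. by rewrite !val_w. Qed.
Lemma eq_ww (i j : 'I_m.+1) : (w i == w j) = (i == j).
Proof. exact: (inj_eq lift_inj). Qed.
Lemma eq_wmax (i : 'I_m.+1) : (w i == mx) = false.
Proof. by apply/negbTE; rewrite eq_sym neq_lift. Qed.
Lemma eq_maxw (i : 'I_m.+1) : (mx == w i) = false.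
Proof. by apply/negbTE; rewrite neq_lift. Qed.
Lemma lt_mm (i : 'I_m.+1) : (mm < i) = false.
Proof. by rewrite ltnNge leq_ord. Qed.

Lemma forall_split (P : pred 'I_m.+2) : [forall x, P x] = [forall i, P (w i)] && P mx.
Proof.
apply/forallP/andP => [H|[/forallP H1 H2] x]; first by split; [apply/forallP=> i|]; apply: H.
by case: (unliftP mx x) => [i ->|->].
Qed.
Lemma exists_split (P : pred 'I_m.+2) : [exists x, P x] = [exists i, P (w i)] || P mx.
Proof.
apply/existsP/orP => [[x]|[/existsP [i H]|H]].
- by case: (unliftP mx x) => [i ->|->] H; [left; apply/existsP; exists i|right].
- by exists (w i).
- by exists mx.
Qed.

Lemma io_ww (i j : 'I_m.+1) : is_origin (w i) (w j) = is_origin i j.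
Proof. by rewrite /is_origin !val_w'. Qed.
Lemma io_xm (i : 'I_m.+2) : is_origin i mx = false.
Proof. by rewrite /is_origin andbF. Qed.
Lemma io_mx (i : 'I_m.+2) : is_origin mx i = false.
Proof. by rewrite /is_origin. Qed.

Lemma ip_childF n (M : 'M[bool]_n) p i j : M i j = false -> is_parent M p (i,j) = false.
Proof. by case: p => a b; rewrite /is_parent => ->; rewrite andbF. Qed.

Lemma sum_split (F : 'I_m.+2 -> nat) : \sum_(x < m.+2) F x = \sum_(x < m.+1) F (w x) + F mx.
Proof.
rewrite big_ord_recr; congr (_ + _); apply: eq_bigr => x _; congr F.
by apply: val_inj; rewrite val_w'.
Qed.

Lemma sum_pick (y : 'I_m.+1) (T : bool) : \sum_(x < m.+1) ((x == y) && T : nat) = T.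
Proof.
rewrite (bigD1 y) //= eqxx big1 ?addn0 // => x /negbTE -> //.
Qed.

Variable c : 'I_m.+1.
Variable M : 'M[bool]_(m.+1).

Definition ext : 'M[bool]_(m.+2) := \matrix_(i, j)
  match unlift mx i, unlift mx j with
  | Some i', Some j' => M i' j'
  | None, Some j' => j' == c
  | Some i', None => i' == mm
  | None, None => false end.

Lemma extE_ww i j : ext (w i) (w j) = M i j.
Proof. by rewrite mxE !liftK. Qed.
Lemma extE_wm i : ext (w i) mx = (i == mm).
Proof. by rewrite mxE liftK unlift_none. Qed.
Lemma extE_mw j : ext mx (w j) = (j == c).
Proof. by rewrite mxE liftK unlift_none. Qed.
Lemma extE_mm : ext mx mx = false.
Proof. by rewrite mxE unlift_none. Qed.

Definition extE := (extE_ww, extE_wm, extE_mw, extE_mm).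

Lemma ha_ww i j : has_above ext (w i) (w j) = has_above M i j.
Proof.
rewrite /has_above exists_split lt_maxw orbF.
by apply: eq_existsb => x; rewrite lt_ww extE_ww.
Qed.
Lemma hl_ww i j : has_left ext (w i) (w j) = has_left M i j.
Proof.
rewrite /has_left exists_split lt_maxw orbF.
by apply: eq_existsb => x; rewrite lt_ww extE_ww.
Qed.

Lemma ip_ww a b i j : is_parent ext (w a, w b) (w i, w j) = is_parent M (a,b) (i,j).
Proof.
rewrite /is_parent ha_ww.
have -> : [forall i'' : 'I_m.+2, ((w a < i'') && (i'' < w i)) ==> ~~ ext i'' (w j)]
   = [forall i'' : 'I_m.+1, ((a < i'') && (i'' < i)) ==> ~~ M i'' j].
  rewrite forall_split lt_maxw andbF /= andbT.
  by apply: eq_forallb => x; rewrite !lt_ww extE_ww.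
have -> : [forall j'' : 'I_m.+2, ((w b < j'') && (j'' < w j)) ==> ~~ ext (w i) j'']
   = [forall j'' : 'I_m.+1, ((b < j'') && (j'' < j)) ==> ~~ M i j''].
  rewrite forall_split lt_maxw andbF /= andbT.
  by apply: eq_forallb => x; rewrite !lt_ww extE_ww.
by rewrite !extE_ww io_ww !eq_ww !lt_ww.
Qed.


Hypothesis H : forall j, M mm j = (j == c).

Lemma Mc : M mm c.
Proof. by rewrite H eqxx. Qed.

Lemma ha_mw : has_above ext mx (w c) = true.
Proof.
rewrite /has_above exists_split; apply/orP; left; apply/existsP; exists mm.
by rewrite lt_wmax extE_ww Mc.
Qed.
Lemma hl_mw : has_left ext mx (w c) = false.
Proof.
rewrite /has_left exists_split lt_maxw orbF; apply/negbTE/negP => /existsP [y].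
by rewrite lt_ww extE_mw => /andP [l /eqP e]; subst; rewrite ltnn in l.
Qed.
Lemma ha_wm : has_above ext (w mm) mx = false.
Proof.
rewrite /has_above exists_split lt_maxw orbF; apply/negbTE/negP => /existsP [y].
by rewrite lt_ww extE_wm => /andP [l /eqP e]; subst; rewrite ltnn in l.
Qed.
Lemma hl_wm : has_left ext (w mm) mx = true.
Proof.
rewrite /has_left exists_split; apply/orP; left; apply/existsP; exists c.
by rewrite lt_wmax extE_ww Mc.
Qed.

Lemma ip_w_mw a b : is_parent ext (w a, w b) (mx, w c) = (a == mm) && (b == c).
Proof.
rewrite /is_parent extE_ww extE_mw eqxx io_mx ha_mw eq_ww lt_wmax.
rewrite forall_split ltnn andbF implyFb andbT; change (~~ false) with true; rewrite !andTb.
have -> : [forall x : 'I_m.+1, ((w a < w x) && (w x < mx)) ==> ~~ ext (w x) (w c)]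
   = [forall x : 'I_m.+1, (a < x) ==> ~~ M x c].
  by apply: eq_forallb => x; rewrite lt_ww lt_wmax andbT extE_ww.
case: (eqVneq b c) => [->|]; last by rewrite !andbF.
case: (eqVneq a mm) => [->|ne] /=.
  by rewrite Mc /=; apply/forallP => x; rewrite lt_mm.
apply/negbTE; rewrite negb_and; apply/orP; right.
apply/forallPn; exists mm; rewrite Mc implybF negbK.
rewrite ltn_neqAle leq_ord andbT; apply: contra ne => /eqP e; apply/eqP/val_inj.
exact: e.
Qed.

Lemma ip_w_wm a b : is_parent ext (w a, w b) (w mm, mx) = (a == mm) && (b == c).
Proof.
rewrite /is_parent extE_ww extE_wm eqxx io_xm ha_wm eq_ww lt_wmax.
rewrite forall_split ltnn andbF implyFb andbT; change (~~ false) with true; rewrite !andTb.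
have -> : [forall x : 'I_m.+1, ((w b < w x) && (w x < mx)) ==> ~~ ext (w mm) (w x)]
   = [forall x : 'I_m.+1, (b < x) ==> (x != c)].
  by apply: eq_forallb => x; rewrite lt_ww lt_wmax andbT extE_ww H.
case: (eqVneq a mm) => [->|]; last by rewrite !andbF.
rewrite H /=; case: (eqVneq b c) => [->|] //=.
by apply/forallP => x; apply/implyP => l; apply: contraTneq l => ->; rewrite ltnn.
Qed.



Lemma nch_ext a b : nchildren ext (w a, w b) =
  nchildren M (a,b) + ((a == mm) && (b == c)) + ((a == mm) && (b == c)).
Proof.
rewrite !nchE sum_split.
under eq_bigr => x _ do rewrite sum_split.
rewrite sum_split big_split.
congr (_ + _ + _).
- by apply: eq_bigr => x _; apply: eq_bigr => y _; rewrite ip_ww.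
- apply: etrans (sum_pick mm ((a == mm) && (b == c))); apply: eq_bigr => x _.
  case: (eqVneq x mm) => [->|ne]; first by rewrite ip_w_wm.
  by rewrite ip_childF // extE_wm (negbTE ne).
- rewrite ip_childF ?extE_mm // addn0.
  apply: etrans (sum_pick c ((a == mm) && (b == c))); apply: eq_bigr => y _.
  case: (eqVneq y c) => [->|ne]; first by rewrite ip_w_mw.
  by rewrite ip_childF // extE_mw (negbTE ne).
Qed.

Lemma nch_mw : nchildren ext (mx, w c) = 0.
Proof.
rewrite nchE big1 // => x _; rewrite big1 // => y _.
apply/eqP; rewrite eqb0; apply/negP; rewrite /is_parent.
case/and4P => _ Eq _; case: (unliftP mx x) Eq => [x' ->|->] Eq.
- by case: ifP => _ /and3P []; rewrite ?lt_maxw ?eq_maxw.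
- case: ifP => _ /and3P []; first by rewrite ltnn.
  case: (unliftP mx y) Eq => [y' ->|->]; last by rewrite extE_mm.
  by rewrite extE_mw => /eqP -> _; rewrite ltnn.
Qed.

Lemma nch_wm : nchildren ext (w mm, mx) = 0.
Proof.
rewrite nchE big1 // => x _; rewrite big1 // => y _.
apply/eqP; rewrite eqb0; apply/negP; rewrite /is_parent.
case/and4P => _ Eq _; case: ifP => _ /and3P []; last first.
  by move=> _; rewrite ltnNge leq_ord.
move=> /eqP e; subst y; case: (unliftP mx x) Eq => [x' ->|->]; last by rewrite extE_mm.
by rewrite lt_ww lt_mm.
Qed.

Lemma C1E : [exists i, exists j, is_origin i j && ext i j] =
            [exists i, exists j, is_origin i j && M i j].
Proof.
apply/idP/idP.
- case/existsP => x /existsP [y /andP [o e]].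
  case: (unliftP mx x) o e => [x' ->|->]; last by rewrite io_mx.
  case: (unliftP mx y) => [y' ->|->]; last by rewrite io_xm.
  by rewrite io_ww extE_ww => o e; apply/existsP; exists x'; apply/existsP; exists y'; rewrite o e.
- case/existsP => x /existsP [y /andP [o e]].
  by apply/existsP; exists (w x); apply/existsP; exists (w y); rewrite io_ww extE_ww o e.
Qed.

Lemma C2E : cond2 ext = cond2 M.
Proof.
apply/idP/idP.
- move=> /forallP C; apply/forallP => i; apply/forallP => j.
  by have := forallP (C (w i)) (w j); rewrite extE_ww io_ww ha_ww hl_ww.
- move=> /forallP C; apply/forallP => x; apply/forallP => y.
  case: (unliftP mx x) => [i ->|->]; case: (unliftP mx y) => [j ->|->].
  + by rewrite extE_ww io_ww ha_ww hl_ww; exact: (forallP (C i) j).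
  + by rewrite extE_wm; case: (eqVneq i mm) => [->|] //=; rewrite ha_wm hl_wm; by case: (~~ _).
  + by rewrite extE_mw; case: (eqVneq j c) => [->|] //=; rewrite ha_mw hl_mw.
  + by rewrite mxE unlift_none.
Qed.

Lemma C3E : [forall i, exists j, ext i j] = [forall i, exists j, M i j].
Proof.
apply/idP/idP.
- move=> /forallP C; apply/forallP => i.
  case/existsP: (C (w i)) => y; case: (unliftP mx y) => [j ->|->].
  + by rewrite extE_ww => e; apply/existsP; exists j.
  + by rewrite extE_wm => /eqP ->; apply/existsP; exists c; rewrite Mc.
- move=> /forallP C; apply/forallP => x; case: (unliftP mx x) => [i ->|->].
  + by case/existsP: (C i) => j e; apply/existsP; exists (w j); rewrite extE_ww.
  + by apply/existsP; exists (w c); rewrite extE_mw.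
Qed.

Lemma C4E : [forall j, exists i, ext i j] = [forall j, exists i, M i j].
Proof.
apply/idP/idP.
- move=> /forallP C; apply/forallP => j.
  case/existsP: (C (w j)) => y; case: (unliftP mx y) => [i ->|->].
  + by rewrite extE_ww => e; apply/existsP; exists i.
  + by rewrite extE_mw => /eqP ->; apply/existsP; exists mm; rewrite Mc.
- move=> /forallP C; apply/forallP => x; case: (unliftP mx x) => [j ->|->].
  + by case/existsP: (C j) => i e; apply/existsP; exists (w i); rewrite extE_ww.
  + by apply/existsP; exists (w mm); rewrite extE_wm.
Qed.

Lemma C5E : cond5 ext = cond5 M && (nchildren M (mm, c) == 0).
Proof.
apply/idP/idP.
- move=> /forallP C.
  have N0 : nchildren M (mm, c) == 0.
    have := forallP (C (w mm)) (w c); rewrite extE_ww Mc nch_ext !eqxx /=.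
    by rewrite addn1 addn1 eqSS => /orP [] // /eqP ->.
  rewrite N0 andbT; apply/forallP => i; apply/forallP => j.
  case tE: ((i == mm) && (j == c)).
    by case/andP: tE => /eqP -> /eqP ->; rewrite N0 implybT.
  by have := forallP (C (w i)) (w j); rewrite extE_ww nch_ext tE !addn0.
- case/andP => /forallP C /eqP N0; apply/forallP => x; apply/forallP => y.
  case: (unliftP mx x) => [i ->|->]; case: (unliftP mx y) => [j ->|->].
  + rewrite extE_ww nch_ext; case tE: ((i == mm) && (j == c)).
      by case/andP: tE => /eqP -> /eqP ->; rewrite N0 implybT.
    by rewrite !addn0; exact: (forallP (C i) j).
  + by rewrite extE_wm; case: (eqVneq i mm) => [->|] //=; rewrite nch_wm.
  + by rewrite extE_mw; case: (eqVneq j c) => [->|] //=; rewrite nch_mw.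
  + by rewrite mxE unlift_none.
Qed.

Lemma CNM_ext : is_CNM ext = is_CNM M && (nchildren M (mm, c) == 0).
Proof.
rewrite /is_CNM C1E C3E C4E.
have := C2E; rewrite /cond2 => ->.
have := C5E; rewrite /cond5 => ->.
by rewrite !andbA.
Qed.

End Ext.

Section Ext2.
Variable m : nat.
Notation w := (@lift m.+2 ord_max).
Notation mm := (@ord_max m).
Notation mx := (@ord_max m.+1).

Lemma wP (x : 'I_m.+2) : (exists i : 'I_m.+1, x = w i) \/ x = mx.
Proof. by case: (unliftP mx x) => [i ->|->]; [left; exists i|right]. Qed.

Definition ext1 (s : 'S_m.+1) : 'S_m.+2 := (tperm (w mm) mx * lift_perm mx mx s)%g.

Lemma ext1_w s i : i != mm -> ext1 s (w i) = w (s i).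
Proof.
move=> ne; rewrite permM tpermD ?lift_perm_lift //.
  by rewrite eq_ww eq_sym.
by rewrite eq_maxw.
Qed.
Lemma ext1_mm s : ext1 s (w mm) = mx.
Proof. by rewrite permM tpermL lift_perm_id. Qed.
Lemma ext1_max s : ext1 s mx = w (s mm).
Proof. by rewrite permM tpermR lift_perm_lift. Qed.
Lemma ext1_inv s : ((ext1 s)^-1)%g mx = w mm.
Proof. by apply: (@perm_inj _ (ext1 s)); rewrite permKV ext1_mm. Qed.

Lemma ext1_inj : injective ext1.
Proof.
move=> s t E; apply/permP => i; case: (eqVneq i mm) => [->|ne].
  by apply: (@lift_inj _ mx); rewrite -!ext1_max E.
by apply: (@lift_inj _ mx); rewrite -!ext1_w // E.
Qed.

Variables (s : 'S_m.+1) (M : 'M[bool]_(m.+1)).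
Notation c := (s mm).
Hypothesis H : forall j, M mm j = (j == c).
Hypothesis N0 : nchildren M (mm, c) = 0.

Lemma leaf_ext : leaf_matrix (ext c M) = perm_bmx (ext1 s) <-> leaf_matrix M = perm_bmx s.
Proof.
split.
- move/matrixP => L; apply/matrixP => i j.
  have := L (w i) (w j); rewrite !mxE !liftK (nch_ext H).
  case: (eqVneq i mm) => [->|ne].
    rewrite H; case: (eqVneq j c) => [->|ne2] _; first by rewrite N0 !eqxx.
    by [].
  by rewrite (ext1_w s ne) eq_ww !andFb !addn0.
- move/matrixP => L; apply/matrixP => x y.
  case: (wP x) => [[i ->]|->]; case: (wP y) => [[j ->]|->]; rewrite !mxE ?liftK ?unlift_none.
  + rewrite (nch_ext H); case: (eqVneq i mm) => [->|ne].
      rewrite (ext1_mm s) eq_maxw H; case: (eqVneq j c) => [->|] //=.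
      by rewrite addn1 addn1.
    have := L i j; rewrite !mxE (ext1_w s ne) eq_ww => <-.
    by rewrite !andFb !addn0.
  + case: (eqVneq i mm) => [->|ne].
      by rewrite (ext1_mm s) nch_wm !eqxx.
    by rewrite (ext1_w s ne) eq_wmax.
  + rewrite (ext1_max s) eq_ww; case: (eqVneq j c) => [->|ne].
      by rewrite nch_mw !eqxx.
    by [].
  + by rewrite (ext1_max s) eq_wmax.
Qed.

End Ext2.

Section Ext3.
Variable m : nat.
Notation w := (@lift m.+2 ord_max).
Notation mm := (@ord_max m).
Notation mx := (@ord_max m.+1).

Definition res (N : 'M[bool]_(m.+2)) : 'M[bool]_(m.+1) := \matrix_(i, j) N (w i) (w j).

Lemma res_ext c M : res (ext c M) = M.
Proof. by apply/matrixP => i j; rewrite mxE extE_ww. Qed.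

Lemma res_props (s : 'S_m.+1) N : is_CNM N -> leaf_matrix N = perm_bmx (ext1 s) ->
  (forall j, N (w mm) (w j) = (j == s mm)) /\ N = ext (s mm) (res N).
Proof.
move=> HN L.
have LR : forall y, N mx y = (w (s mm) == y).
  by move=> y; rewrite (last_row HN L) (ext1_max s).
have LC : forall x, N x mx = (w mm == x).
  by move=> x; rewrite (last_col HN L) (ext1_inv s).
have A : forall j, N (w mm) (w j) -> j == s mm.
  move=> j e; have := HN; case/and5P => _ _ _ _ C5.
  have := forallP (forallP C5 (w mm)) (w j); rewrite e /=.
  case/orP => [/eqP N0'|/eqP /nch2_col [[a b] /andP [P HA]]].
    move/matrixP: L => /(_ (w mm) (w j)); rewrite !mxE e N0' (ext1_mm s).
    by rewrite eq_maxw.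
  move: HA => /= HA; case/and4P: P => _ Nab _; rewrite HA => /and3P [/eqP eb lt _].
  case: (wP a) Nab lt => [[a' ->]|->] Nab lt; first by rewrite lt_ww lt_mm in lt.
  by rewrite -eb LR eq_ww eq_sym in Nab.
have H' : forall j, N (w mm) (w j) = (j == s mm).
  move=> j; apply/idP/idP; first exact: A.
  move=> /eqP ->; have := HN; case/and5P => _ /forallP C2 _ _ _.
  have := forallP (C2 (w mm)) mx; rewrite LC eqxx io_xm /=.
  have -> : has_above N (w mm) mx = false.
    apply/negbTE/negP => /existsP [i' /andP [l]]; rewrite LC => /eqP e.
    by rewrite -e ltnn in l.
  case/existsP => j' /andP [l e]; case: (wP j') l e => [[y ->]|->] l e; last by rewrite ltnn in l.
  by have := A y e => /eqP <-.
split=> //; apply/matrixP => x y.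
case: (wP x) => [[i ->]|->]; case: (wP y) => [[j ->]|->].
- by rewrite extE_ww mxE.
- by rewrite extE_wm LC eq_ww eq_sym.
- by rewrite extE_mw LR eq_ww eq_sym.
- by rewrite extE_mm LR eq_wmax.
Qed.

Lemma num_ext1 (s : 'S_m.+1) : num_CNM_with_leaves (ext1 s) = num_CNM_with_leaves s.
Proof.
rewrite /num_CNM_with_leaves.
have -> : [set N : 'M[bool]_(m.+2) | is_CNM N && (leaf_matrix N == perm_bmx (ext1 s))] =
    (ext (s mm)) @: [set M : 'M[bool]_(m.+1) | is_CNM M && (leaf_matrix M == perm_bmx s)].
  apply/setP => N; rewrite inE; apply/idP/imsetP.
  - case/andP => HN /eqP L; have [H' EN] := res_props HN L.
    exists (res N); last exact: EN.
    have HR : forall j, res N mm j = (j == s mm) by move=> j; rewrite mxE H'.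
    have HE : is_CNM (ext (s mm) (res N)) by rewrite -EN.
    move: HE; rewrite (CNM_ext HR) => /andP [HM /eqP N0].
    rewrite inE HM /=; apply/eqP; apply/(leaf_ext HR N0).
    by rewrite -EN.
  - move=> [M]; rewrite inE => /andP [HM /eqP L] ->.
    have H : forall j, M mm j = (j == s mm) by move=> j; rewrite (last_row HM L) eq_sym.
    have N0 : nchildren M (mm, s mm) = 0.
      move/matrixP: L => /(_ mm (s mm)); rewrite !mxE eqxx.
      by case/andP => _ /eqP.
    rewrite (CNM_ext H) HM N0 /=; apply/eqP; exact/(leaf_ext H N0).
rewrite card_in_imset // => M1 M2 _ _ E.
by rewrite -[M1](res_ext (s mm)) -[M2](res_ext (s mm)) E.
Qed.

End Ext3.


Lemma fixlast (m : nat) (s : 'S_m.+2) : 0 < num_CNM_with_leaves s -> s ord_max != ord_max.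
Proof.
move=> /card_gt0P [M]; rewrite inE => /andP [HM /eqP L]; apply/eqP => e.
have LR := last_row HM L; have LC := last_col HM L.
have ei : (s^-1)%g ord_max = ord_max by apply: (@perm_inj _ s); rewrite permKV e.
case/and5P: HM => _ /forallP C2 _ _ _.
have := forallP (C2 ord_max) ord_max; rewrite LR e eqxx /=.
have -> : has_above M ord_max ord_max = false.
  apply/negbTE/negP => /existsP [i' /andP [l]]; rewrite LC ei => /eqP ee.
  by rewrite -ee ltnn in l.
have -> : has_left M ord_max ord_max = false.
  apply/negbTE/negP => /existsP [i' /andP [l]]; rewrite LR e => /eqP ee.
  by rewrite -ee ltnn in l.
by [].
Qed.

Theorem theorem5p1 (n k : nat) : 2 <= n -> 1 <= k -> 2 * b n k <= b n.+1 k.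
Proof.
case: n => [|[|m]] // _ k1.
rewrite /b.
set A := [set s : 'S_m.+2 | num_CNM_with_leaves s == k].
have inj1 : injective (@ext1 m.+1) := @ext1_inj m.+1.
pose f2 := fun s : 'S_m.+2 => ((@ext1 m.+1 (s^-1)%g)^-1)%g.
have inj2 : injective f2.
  by move=> s t /invg_inj /(@ext1_inj m.+1) /invg_inj.
have sub : ((@ext1 m.+1) @: A) :|: (f2 @: A) \subset [set s | num_CNM_with_leaves s == k].
  apply/subsetP => x; rewrite inE => /orP [] /imsetP [s]; rewrite inE => /eqP ns ->; rewrite inE.
  - by rewrite num_ext1 ns.
  - by rewrite /f2 num_inv num_ext1 num_inv ns.
have dis : ((@ext1 m.+1) @: A) :&: (f2 @: A) = set0.
  apply/setP => x; rewrite !inE; apply/negbTE/negP.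
  move=> /andP [/imsetP [s1 h1 ->] /imsetP [s2 h2 E]].
  have := congr1 (fun p : 'S_m.+3 => p ord_max) E.
  rewrite /= /f2 ext1_max ext1_inv => /lift_inj e.
  move: h1; rewrite inE => /eqP ns1.
  have : 0 < num_CNM_with_leaves s1 by rewrite ns1.
  by move/fixlast; rewrite e eqxx.
rewrite mul2n -addnn.
rewrite -{1}(card_imset A inj1) -(card_imset A inj2).
apply: leq_trans (subset_leq_card sub).
by rewrite cardsU dis cards0 subn0.
Qed.
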